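(* Let $(X,Y)$ be random with $Y\in\{0,1\}$, let $f$ take values in $S=\{s_1,\dots,s_B\}\subseteq[0,1]$, and let $T_n=\{(x_j,y_j)\}_{j=1}^n$ be i.i.d. from $(X,Y)$. Let $0\le c<0.5$ and $0<\delta<1$. Conditional on any realization of $(f(x_1),\dots,f(x_n))$ for which $|\hat p_i-p_i|<c\,p_i$ for all $i$, with probability at least $1-\delta$, $0\le \sum_{i=1}^B\hat p_i(\hat y_i-y_i^* )^2\le\frac{B}{2n}\log\frac{2B}{\delta}$.
   Context: $p_i=\Pr(f(X)=s_i)$, $y_i^*=\mathbb{E}[Y\mid f(X)=s_i]$. $\hat p_i=|\{j:f(x_j)=s_i\}|/n$ and $\hat y_i$ is the average of $y_j$ over $j$ with $f(x_j)=s_i$. *)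

(* Defs.v *)
From HB Require Import structures.
From mathcomp Require Import all_boot all_order all_algebra.
From mathcomp Require Import reals exp.
Set Implicit Arguments. Unset Strict Implicit. Unset Printing Implicit Defensive.
Import Order.TTheory GRing.Theory Num.Theory.
Local Open Scope ring_scope.

(* Only the joint law of
   (f(X), Y) matters: P0 i y = Pr(f(X) = s_i, Y = y), i : 'I_B, y : bool.
   A sample T_n, seen through f, is w : {ffun 'I_n -> 'I_B * bool},
   w j = (bin index of f(x_j), y_j); the i.i.d. law is the product law. *)
Section Calib.
Variables (R : realType) (B n : nat).

Definition pmass (P0 : 'I_B -> bool -> R) (i : 'I_B) : R := P0 i true + P0 i false.

Definition ystar (P0 : 'I_B -> bool -> R) (i : 'I_B) : R := P0 i true / pmass P0 i.

Definition sampleP (P0 : 'I_B -> bool -> R) (w : {ffun 'I_n -> 'I_B * bool}) : R :=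
  \prod_(j < n) P0 (w j).1 (w j).2.

Definition scores (w : {ffun 'I_n -> 'I_B * bool}) : {ffun 'I_n -> 'I_B} :=
  [ffun j => (w j).1].

Definition phat (b : {ffun 'I_n -> 'I_B}) (i : 'I_B) : R :=
  #|[set j | b j == i]|%:R / n%:R.

Definition yhat (w : {ffun 'I_n -> 'I_B * bool}) (i : 'I_B) : R :=
  (\sum_(j < n | (w j).1 == i) ((w j).2)%:R) / #|[set j | (w j).1 == i]|%:R.

Definition calib_err (P0 : 'I_B -> bool -> R) (w : {ffun 'I_n -> 'I_B * bool}) : R :=
  \sum_(i < B) phat (scores w) i * (yhat w i - ystar P0 i) ^+ 2.

Definition condprob (P0 : 'I_B -> bool -> R) (b : {ffun 'I_n -> 'I_B})
    (E : pred {ffun 'I_n -> 'I_B * bool}) : R :=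
  (\sum_(w | (scores w == b) && E w) sampleP P0 w) /
  (\sum_(w | scores w == b) sampleP P0 w).

End Calib.

(* Main.v *)
Require Import Defs.
From HB Require Import structures.
From mathcomp Require Import all_boot all_order all_algebra.
From mathcomp Require Import ring lra.
From mathcomp Require Import all_classical reals exp sequences derive realfun normedtype topology.
Import Order.TTheory GRing.Theory Num.Theory.
Import numFieldNormedType.Exports.
Local Open Scope ring_scope.
Section Hoeff.
Variable R : realType.
Variable p : R.
Hypothesis p0 : 0 <= p.
Hypothesis p1 : p <= 1.

Let D (x : R) := p * expR x + (1 - p).

Lemma D_ge1 (x : R) : 0 <= x -> 1 <= D x.
Proof.
move=> x0; rewrite /D.
have : 1 <= expR x by rewrite -expR0 ler_expR.
move=> e1; have : 0 <= p * (expR x - 1) by rewrite mulr_ge0 // subr_ge0.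
lra.
Qed.

Let h (x : R) := p + x / 4 - p * expR x * (D x)^-1.
Let dh (x : R) := 4^-1 - p * expR x * (1 - p) / (D x)^+2.

Lemma is_derive_h (x : R) : 0 <= x -> is_derive x 1 h (dh x).
Proof.
move=> x0.
have Dx : D x != 0 by rewrite gt_eqF // (lt_le_trans ltr01) // D_ge1.
rewrite /h /dh.
apply: is_derive_eq.
have e : 1 - p = D x - p * expR x by rewrite /D; ring.
rewrite e; set d := D x; set E := expR x.
rewrite !scaler0 !addr0 /GRing.scale /=.
by field.
Qed.

Lemma dh_ge0 (x : R) : 0 <= x -> 0 <= dh x.
Proof.
move=> x0; have d1 := D_ge1 x x0.
rewrite /dh subr_ge0 ler_pdivrMr; last by rewrite exprn_gt0 // (lt_le_trans ltr01).
have := sqr_ge0 (p * expR x - (1 - p)).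
move: d1; rewrite /D => d1; nra.
Qed.

Lemma h_ge0 (x : R) : 0 <= x -> 0 <= h x.
Proof.
move=> x0.
have hd : forall y, y \in `[0, x] -> derivable h y 1.
  move=> y; rewrite in_itv /= => /andP[y0 _].
  by have [] := is_derive_h y y0.
have hd' : forall y, y \in `]0, x[ -> is_derive y 1 h (dh y).
  by move=> y; rewrite in_itv /= => /andP[y0 _]; apply: is_derive_h; exact: ltW.
have [c] := MVT_segment x0 hd' (derivable_within_continuous hd).
rewrite in_itv /= => /andP[c0 _].
have -> : h 0 = 0.
  have e1 : p + (1 - p) = 1 by rewrite addrC subrK.
  by rewrite /h /D expR0 !mulr1 mul0r addr0 e1 invr1 mulr1 subrr.
move=> /eqP; rewrite !subr0 => /eqP ->.
exact: mulr_ge0 (dh_ge0 c c0) x0.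
Qed.



Let F (y : R) := D y * expR (- (p * y + y * y / 8)).
Let dF (y : R) := - (expR (- (p * y + y * y / 8)) * D y * h y).

Lemma is_derive_F (y : R) : 0 <= y -> is_derive y 1 F (dF y).
Proof.
move=> y0.
have Dy : D y != 0 by rewrite gt_eqF // (lt_le_trans ltr01) // D_ge1.
have hg : is_derive y 1 (fun z : R => - (p * z + z * z / 8)) (- (p + y / 4)).
  apply: is_derive_eq.
  by rewrite /GRing.scale /=; field.
have he : is_derive y 1 (fun z : R => expR (- (p * z + z * z / 8)))
   (expR (- (p * y + y * y / 8)) * - (p + y / 4)).
  exact: (is_derive1_comp (f := expR) (g := fun z : R => - (p * z + z * z / 8))).
rewrite /F; apply: is_derive_eq.
rewrite /dF /h /GRing.scale /= addr0.
by field.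
Qed.

Lemma F_le1 (x : R) : 0 <= x -> F x <= 1.
Proof.
move=> x0.
have hd : forall y, y \in `[0, x] -> derivable F y 1.
  move=> y; rewrite in_itv /= => /andP[y0 _].
  by have [] := is_derive_F y y0.
have hd' : forall y, y \in `]0, x[ -> is_derive y 1 F (dF y).
  by move=> y; rewrite in_itv /= => /andP[y0 _]; apply: is_derive_F; exact: ltW.
have [c] := MVT_segment x0 hd' (derivable_within_continuous hd).
rewrite in_itv /= => /andP[c0 _].
have -> : F 0 = 1.
  have e1 : p + (1 - p) = 1 by rewrite addrC subrK.
  by rewrite /F /D expR0 !mulr1 !mul0r !addr0 e1 mulr0 oppr0 expR0 mulr1.
move=> /eqP; rewrite subr0 subr_eq => /eqP ->.
rewrite gerDr /dF mulNr oppr_le0 mulr_ge0 //.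
rewrite mulr_ge0 // ?h_ge0 // mulr_ge0 ?expR_ge0 //.
by rewrite (le_trans ler01) // D_ge1.
Qed.

Lemma hoeff_pos (x : R) : 0 <= x ->
  p * expR (x * (1 - p)) + (1 - p) * expR (- (x * p)) <= expR (x ^+ 2 / 8).
Proof.
move=> x0; have := F_le1 x x0.
rewrite /F /D.
have -> : p * expR (x * (1 - p)) + (1 - p) * expR (- (x * p)) =
   (p * expR x + (1 - p)) * expR (- (x * p)).
  have -> : expR (x * (1 - p)) = expR x * expR (- (x * p)).
    by rewrite -expRD; congr expR; ring.
  ring.
move=> H.
have -> : expR (- (x * p)) = expR (- (p * x + x * x / 8)) * expR (x ^+ 2 / 8).
  by rewrite -expRD; congr expR; ring.
by rewrite mulrA -[X in _ <= X]mul1r ler_pM2r ?expR_gt0.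
Qed.
End Hoeff.

Lemma hoeff (R : realType) (p x : R) : 0 <= p -> p <= 1 ->
  p * expR (x * (1 - p)) + (1 - p) * expR (- (x * p)) <= expR (x ^+ 2 / 8).
Proof.
move=> p0 p1; have [x0|x0] := leP 0 x; first exact: hoeff_pos.
have q0 : 0 <= 1 - p by rewrite subr_ge0.
have q1 : 1 - p <= 1 by rewrite lerBlDr lerDl.
have nx : 0 <= - x by rewrite oppr_ge0 ltW.
have := @hoeff_pos R (1 - p) q0 (- x) nx.
have -> : 1 - (1 - p) = p by ring.
rewrite sqrrN; apply: le_trans; rewrite addrC.
by rewrite !mulNr opprK.
Qed.
Section SumLemmas.
Variable R : realType.

Lemma sum_le_union (T : finType) (F : T -> R) (P Q1 Q2 : pred T) :
  (forall y, 0 <= F y) -> (forall y, P y -> Q1 y || Q2 y) ->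
  \sum_(y | P y) F y <= \sum_(y | Q1 y) F y + \sum_(y | Q2 y) F y.
Proof.
move=> F0 H; rewrite [X in X <= _]big_mkcond [X in _ <= X + _]big_mkcond.
rewrite [X in _ <= _ + X]big_mkcond -big_split /=; apply: ler_sum => y _.
case Py: (P y); last by rewrite addr_ge0 //; case: ifP.
have := H y Py; case: (Q1 y); case: (Q2 y) => //= _.
- by rewrite lerDl.
- by rewrite addr0.
- by rewrite add0r.
Qed.

Lemma sum_le_bigunion (T I : finType) (F : T -> R) (P : pred T) (Q : I -> pred T) :
  (forall y, 0 <= F y) -> (forall y, P y -> exists i, Q i y) ->
  \sum_(y | P y) F y <= \sum_i \sum_(y | Q i y) F y.
Proof.
move=> F0 H.
rewrite (eq_bigr (fun i => \sum_y (if Q i y then F y else 0))); last first.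
  by move=> i _; rewrite big_mkcond.
rewrite exchange_big /= big_mkcond; apply: ler_sum => y _.
case Py: (P y); last by apply: sumr_ge0 => i _; case: ifP.
have [i0 Hi0] := H y Py.
rewrite (bigD1 i0) //= Hi0 lerDl; apply: sumr_ge0 => i _; by case: ifP.
Qed.

Lemma sum_le_sub (T : finType) (F : T -> R) (P : pred T) :
  (forall y, 0 <= F y) -> \sum_(y | P y) F y <= \sum_y F y.
Proof.
move=> F0; rewrite [X in X <= _]big_mkcond; apply: ler_sum => y _.
by case: ifP.
Qed.

End SumLemmas.

Section Comb.
Variables (R : realType) (B n : nat) (P0 : 'I_B -> bool -> R) (b : {ffun 'I_n -> 'I_B}).
Hypothesis P0ge0 : forall i y, 0 <= P0 i y.
Hypothesis pm_gt0 : forall i, 0 < pmass P0 i.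

Definition mkw (y : {ffun 'I_n -> bool}) : {ffun 'I_n -> 'I_B * bool} :=
  [ffun j => (b j, y j)].
Definition q (j : 'I_n) (t : bool) : R := P0 (b j) t / pmass P0 (b j).
Definition mu (y : {ffun 'I_n -> bool}) : R := \prod_j q j (y j).

Lemma scores_mkw y : scores (mkw y) = b.
Proof. by apply/ffunP => j; rewrite !ffunE. Qed.

Lemma q_ge0 j t : 0 <= q j t.
Proof. exact: divr_ge0 (P0ge0 _ _) (ltW (pm_gt0 _)). Qed.

Lemma mu_ge0 y : 0 <= mu y.
Proof. by apply: prodr_ge0 => j _; apply: q_ge0. Qed.

Lemma qsum j : q j true + q j false = 1.
Proof. by rewrite /q -mulrDl divff // gt_eqF // pm_gt0. Qed.

Lemma mu_sum : \sum_y mu y = 1.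
Proof.
have <- : \prod_j (\sum_t q j t) = \sum_(y : {ffun 'I_n -> bool}) \prod_j q j (y j).
  by rewrite bigA_distr_bigA.
by apply: big1 => j _; rewrite big_bool /= qsum.
Qed.

Lemma num_eq (E : pred {ffun 'I_n -> 'I_B * bool}) :
  \sum_(w | (scores w == b) && E w) sampleP P0 w =
  \sum_(y | E (mkw y)) \prod_j P0 (b j) (y j).
Proof.
rewrite (reindex mkw).
  apply: eq_big => y; first by rewrite scores_mkw eqxx.
  by move=> _; rewrite /sampleP; apply: eq_bigr => j _; rewrite ffunE.
exists (fun w : {ffun 'I_n -> 'I_B * bool} => [ffun j => (w j).2] : {ffun 'I_n -> bool}) => [y _ | w].
  by apply/ffunP => j; rewrite !ffunE.
rewrite inE => /andP[/eqP sb _]; apply/ffunP => j; rewrite !ffunE -sb ffunE.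
by case: (w j).
Qed.

Lemma condprob_mu (E : pred {ffun 'I_n -> 'I_B * bool}) :
  condprob P0 b E = \sum_(y | E (mkw y)) mu y.
Proof.
rewrite /condprob num_eq.
have -> : \sum_(w | scores w == b) sampleP P0 w = \prod_j pmass P0 (b j).
  have H := num_eq (fun _ => true).
  rewrite (eq_bigl (fun w => (scores w == b) && true)); last by move=> w; rewrite andbT.
  rewrite H.
  have <- : \prod_j (\sum_t P0 (b j) t) = \sum_(y : {ffun 'I_n -> bool}) \prod_j P0 (b j) (y j).
    by rewrite bigA_distr_bigA.
  by apply: eq_bigr => j _; rewrite big_bool.
rewrite mulr_suml; apply: eq_bigr => y _.
by rewrite /mu /q prodf_div.
Qed.


Definition m (i : 'I_B) := #|[set j | b j == i]|.
Definition S (i : 'I_B) (y : {ffun 'I_n -> bool}) : R := \sum_(j | b j == i) ((y j)%:R : R).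

Lemma ystar_ge0 i : 0 <= ystar P0 i.
Proof. exact: divr_ge0 (P0ge0 _ _) (ltW (pm_gt0 _)). Qed.

Lemma q_true j : q j true = ystar P0 (b j).
Proof. by []. Qed.

Lemma q_false j : q j false = 1 - ystar P0 (b j).
Proof. by rewrite -q_true -(qsum j) addrC addKr. Qed.

Lemma mgf i k : \sum_y mu y * expR (k * (S i y - (m i)%:R * ystar P0 i)) <=
   expR ((m i)%:R * k ^+ 2 / 8).
Proof.
set p := ystar P0 i.
have E1 y : k * (S i y - (m i)%:R * p) =
    \sum_j (if b j == i then k * ((y j)%:R - p) else 0).
  rewrite -big_mkcond /= -mulr_sumr sumrB; congr (k * (_ - _)).
  rewrite mulr_natl /m -sumr_const; apply: eq_bigl => j; rewrite inE.
  by [].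
rewrite (eq_bigr (fun y : {ffun 'I_n -> bool} => \prod_j (q j (y j) *
     expR (if b j == i then k * ((y j)%:R - p) else 0)))); last first.
  by move=> y _; rewrite E1 expR_sum big_split.
have <- : \prod_j (\sum_t (q j t * expR (if b j == i then k * (t%:R - p) else 0))) =
   \sum_(y : {ffun 'I_n -> bool}) \prod_j (q j (y j) *
     expR (if b j == i then k * ((y j)%:R - p) else 0)).
  by rewrite bigA_distr_bigA.
rewrite -mulrA expRM_natl /m -prodr_const.
rewrite (big_mkcond (fun j => j \in [set j | b j == i])) /=.
apply: ler_prod => j _; rewrite big_bool /= inE.
case: eqP => [bj|_]; last first.
  by rewrite expR0 !mulr1 qsum ler01 lexx.
rewrite q_true q_false bj -/p.
have p0 : 0 <= p by exact: ystar_ge0.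
have p1 : p <= 1.
  by have := q_ge0 j false; rewrite q_false bj -/p subr_ge0.
rewrite addr_ge0 ?mulr_ge0 ?expR_ge0 ?subr_ge0 //=.
have := @hoeff R p k p0 p1.
rewrite sub0r mulrN.
  by [].
by rewrite invr_ge0 ltW.
Qed.

Lemma tail i k s :
  \sum_(y | s < k * (S i y - (m i)%:R * ystar P0 i)) mu y <=
  expR (- s) * expR ((m i)%:R * k ^+ 2 / 8).
Proof.
set X := fun y => k * (S i y - (m i)%:R * ystar P0 i).
apply: (@le_trans _ _ (\sum_(y | s < X y) mu y * expR (X y - s))).
  apply: ler_sum => y sX; rewrite ler_peMr ?mu_ge0 //.
  by apply: le_trans (expR_ge1Dx _); rewrite lerDl subr_ge0 ltW.
apply: (le_trans (@sum_le_sub R _ (fun y => mu y * expR (X y - s)) (fun y => s < X y) _)).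
  by move=> y; rewrite mulr_ge0 ?mu_ge0 ?expR_ge0.
rewrite (eq_bigr (fun y => expR (- s) * (mu y * expR (X y)))); last first.
  by move=> y _; rewrite expRD; ring.
by rewrite -mulr_sumr ler_wpM2l ?expR_ge0 // mgf.
Qed.

Lemma yhat_mkw i y : yhat R (mkw y) i = S i y / (m i)%:R.
Proof.
rewrite /yhat /S /m; congr (_ / _%:R).
  by apply: eq_big => j; rewrite ffunE.
by apply: eq_card => j; rewrite !inE ffunE.
Qed.

Lemma bin i L : 0 < L -> (0 < n)%N ->
  \sum_(y | L / (2 * n%:R) < phat R (scores (mkw y)) i *
      (yhat R (mkw y) i - ystar P0 i) ^+ 2) mu y <= 2 * expR (- L).
Proof.
move=> L0 n0.
have nR : 0 < (n%:R : R) by rewrite ltr0n.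
under eq_bigl do rewrite scores_mkw yhat_mkw /phat -/(m i).
case m0: (m i == 0%N).
  rewrite big_pred0 => [|y]; first by rewrite mulr_ge0 ?expR_ge0.
  rewrite (eqP m0) mul0r mul0r ltNge divr_ge0 // ltW //.
  by rewrite mulr_gt0.
set mm := (m i)%:R.
have mm0 : 0 < mm by rewrite ltr0n lt0n m0.
set p := ystar P0 i.
have t0 : 0 <= mm * L / 2 by rewrite divr_ge0 // mulr_ge0 // ltW.
set t := Num.sqrt (mm * L / 2).
have t2 : t ^+ 2 = mm * L / 2 by rewrite sqr_sqrtr.
have tpos : 0 <= t by rewrite sqrtr_ge0.
set lam := 4 * t / mm.
have lam0 : 0 <= lam by rewrite divr_ge0 // mulr_ge0 // ltW.
apply: (le_trans (@sum_le_union R _ mu _ (fun y => lam * t < lam * (S i y - mm * p))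
   (fun y => lam * t < (- lam) * (S i y - mm * p)) mu_ge0 _)).
  move=> y H; set X := S i y - mm * p.
  have e : mm / n%:R * (S i y / mm - p) ^+ 2 = X ^+ 2 / (n%:R * mm).
    by rewrite /X; field; rewrite gt_eqF // gt_eqF.
  rewrite e in H.
  have key : t ^+ 2 < X ^+ 2.
    have := H; rewrite -(ltr_pM2r (mulr_gt0 nR mm0)).
    have -> : L / (2 * n%:R) * (n%:R * mm) = mm * L / 2.
      by field; rewrite gt_eqF.
    have -> : X ^+ 2 / (n%:R * mm) * (n%:R * mm) = X ^+ 2.
      by field; rewrite gt_eqF // gt_eqF.
    by rewrite t2.
  have lam_pos : 0 < lam by rewrite divr_gt0 // mulr_gt0 // lt_neqAle tpos andbT; apply/eqP => t00; move: key; rewrite -t00 expr0n /=; nra.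
  have [tX|Xt] := ltP t X.
    by apply/orP; left; rewrite ltr_pM2l.
  have [tnX|nXt] := ltP t (- X).
    by apply/orP; right; rewrite mulNr -mulrN ltr_pM2l.
  by exfalso; move: key; nra.
have ee : expR (- (lam * t)) * expR (mm * lam ^+ 2 / 8) = expR (- L).
  rewrite -expRD; congr expR.
  have -> : - (lam * t) + mm * lam ^+ 2 / 8 = - (2 * t ^+ 2 / mm).
    by rewrite /lam; field; rewrite gt_eqF.
  by rewrite t2; field; rewrite gt_eqF.
have h1 := tail i lam (lam * t).
have h2 := tail i (- lam) (lam * t).
rewrite sqrrN ee in h2; rewrite ee in h1.
lra.
Qed.

End Comb.
Lemma main_aux (R : realType) (B n : nat)
    (P0 : 'I_B -> bool -> R) (c delta : R) (b : {ffun 'I_n -> 'I_B}) :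
  (0 < B)%N ->
  (forall i y, 0 <= P0 i y) ->
  0 <= c < 1 / 2 -> 0 < delta < 1 ->
  (forall i : 'I_B, `|phat R b i - pmass P0 i| < c * pmass P0 i) ->
  1 - delta <=
    condprob P0 b (fun w => (0 <= calib_err P0 w) &&
       (calib_err P0 w <= B%:R / (2 * n%:R) * ln (2 * B%:R / delta))).
Proof.
move=> B0 P0ge0 /andP[c0 c1] /andP[d0 d1] Hph.
have pm_gt0 : forall i, 0 < pmass P0 i.
  move=> i; have := Hph i; have := normr_ge0 (phat R b i - pmass P0 i).
  move=> h1 h2; have h3 : 0 < c * pmass P0 i by apply: le_lt_trans h1 h2.
  nra.
have i0 : 'I_B := Ordinal B0.
have n0 : (0 < n)%N.
  case: (posnP n) => // n0; exfalso.
  have := Hph i0; have := pm_gt0 i0.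
  have -> : phat R b i0 = 0.
    by rewrite /phat (_ : (n%:R : R) = 0) ?invr0 ?mulr0 // n0.
  rewrite sub0r normrN => h1; rewrite gtr0_norm //; nra.
have nR : 0 < (n%:R : R) by rewrite ltr0n.
have BR : 0 < (B%:R : R) by rewrite ltr0n.
set L := ln (2 * B%:R / delta).
have KL : 0 < 2 * B%:R / delta by rewrite divr_gt0 // mulr_gt0.
have L0 : 0 < L.
  apply: ln_gt0; rewrite ltr_pdivlMr // mul1r.
  apply: lt_le_trans d1 _; have : 1 <= (B%:R : R) by rewrite ler1n.
  lra.
rewrite condprob_mu.
pose E := fun w : {ffun 'I_n -> 'I_B * bool} => (0 <= calib_err P0 w) &&
   (calib_err P0 w <= B%:R / (2 * n%:R) * L).
change (1 - delta <= \sum_(y | E (mkw B n b y)) mu R B n P0 b y).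
have := mu_sum R B n P0 b pm_gt0; rewrite (bigID (fun y => E (mkw B n b y))) /=.
move=> Hs.
suff : \sum_(y | ~~ E (mkw B n b y)) mu R B n P0 b y <= delta by lra.
pose bad := fun i y => L / (2 * n%:R) <
   phat R (scores (mkw B n b y)) i * (yhat R (mkw B n b y) i - ystar P0 i) ^+ 2.
apply: (le_trans (@sum_le_bigunion R _ 'I_B (mu R B n P0 b)
   (fun y => ~~ E (mkw B n b y)) bad (mu_ge0 R B n P0 b P0ge0 pm_gt0) _)).
  move=> y nE.
  case: (pickP (fun i => bad i y)) => [i Hi | none]; first by exists i.
  exfalso; move: nE; apply/negP; rewrite negbK /E.
  apply/andP; split.
    apply: sumr_ge0 => i _; apply: mulr_ge0; last exact: sqr_ge0.
    by apply: divr_ge0; apply: ler0n.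
  rewrite /calib_err.
  apply: (@le_trans _ _ (\sum_(i < B) (L / (2 * n%:R)))).
    by apply: ler_sum => i _; have := none i; rewrite /bad => /negbT; rewrite -leNgt.
  rewrite sumr_const card_ord -[_ *+ B]mulr_natl; rewrite le_eqVlt; apply/orP; left; apply/eqP.
  by field; rewrite gt_eqF.
apply: (@le_trans _ _ (\sum_(i < B) (2 * expR (- L)))).
  by apply: ler_sum => i _; apply: bin.
rewrite sumr_const card_ord expRN /L lnK ?posrE //.
rewrite -[_ *+ B]mulr_natl; rewrite le_eqVlt; apply/orP; left; apply/eqP.
by field; rewrite !gt_eqF.
Qed.

Theorem mainTheorem9 (R : realType) (B n : nat) (s : 'I_B -> R)
    (P0 : 'I_B -> bool -> R) (c delta : R) (b : {ffun 'I_n -> 'I_B}) :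
  injective s -> (forall i, 0 <= s i <= 1) ->
  (forall i y, 0 <= P0 i y) -> \sum_(i < B) \sum_(y : bool) P0 i y = 1 ->
  0 <= c < 1 / 2 -> 0 < delta < 1 ->
  (forall i : 'I_B, `|phat R b i - pmass P0 i| < c * pmass P0 i) ->
  1 - delta <=
    condprob P0 b (fun w => (0 <= calib_err P0 w) &&
       (calib_err P0 w <= B%:R / (2 * n%:R) * ln (2 * B%:R / delta))).
Proof.
move=> _ _ P0ge0 Psum hc hd Hph.
case: (posnP B) => [B0|Bpos]; last first.

  exact: (@main_aux R B n P0 c delta b Bpos P0ge0 hc hd Hph).
exfalso; subst B; move: Psum; rewrite big_ord0 => /eqP.
by rewrite eq_sym oner_eq0.
Qed.
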